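(* For every $n\ge1$ and every $\sigma\in S_n(123)$ (permutations of $[n]$ with no increasing subsequence of length $3$), $\mu(\sigma)=L'(\lambda(\sigma))$.
   Context: Dyck path of semilength $n$: lattice path from $(0,0)$ to $(2n,0)$ with steps $U=(1,1)$, $D=(1,-1)$, never below the $x$-axis. A return is a down step ending on the $x$-axis; a Dyck path is irreducible if it has exactly one return; every Dyck path $P$ factors uniquely as $P=P_1\cdots P_r$ with each $P_i$ irreducible (its irreducible components). If $P$ has ascents (maximal runs of $U$) of lengths $a_1,\dots,a_k$ and descents of lengths $d_1,\dots,d_k$ (left to right), with $A_i=a_1+\dots+a_i$, $D_i=d_1+\dots+d_i$, its ascent-descent code is $(A,D)$ with $A=A_1,\dots,A_{k-1}$, $D=D_1,\dots,D_{k-1}$; this determines $P$. $P$ is irreducible iff $A_i>D_i$ for all $i$. The map $L'$: for an irreducible path $P$ of semilength $n$ with code $A=A_1,\dots,A_h$, $D=D_1,\dots,D_h$, let $\{\hat A_1>\dots>\hat A_{n-2-h}\}=\{1,\dots,n-2\}\setminus\{A_1-1,\dots,A_h-1\}$ and $\{\hat D_1>\dots>\hat D_{n-2-h}\}=\{1,\dots,n-2\}\setminus\{D_1,\dots,D_h\}$; $L'(P)$ is the (irreducible) Dyck path of semilength $n$ with code $A'_i=n-\hat A_i$, $D'_i=n-1-\hat D_i$. For a general Dyck path with irreducible components $P_1\cdots P_r$, $L'(P_1\cdots P_r)=L'(P_r)\cdots L'(P_1)$; $L'$ of the empty path is empty. (This is the paper's variant of the Kreweras–Lalanne involution: reflect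 $P$ in a vertical line and replace each irreducible component $UXD$ by $U\,L(X)\,D$, $L$ the Kreweras–Lalanne involution.) For $\sigma=x_1\cdots x_n$: $x_i$ is a left-to-right (LTR) minimum if $x_i<x_j$ for all $j<i$; $x_i$ is a right-to-left (RTL) maximum if $x_i>x_j$ for all $j>i$. $\lambda(\sigma)$: write $\sigma=m_1w_1\cdots m_kw_k$ with $m_1>\dots>m_k$ the LTR minima and $w_i$ possibly empty words, $m_0=n+1$; $\lambda(\sigma)=U^{m_0-m_1}D^{|w_1|+1}\cdots U^{m_{k-1}-m_k}D^{|w_k|+1}$. $\mu(\sigma)$: write $\sigma=u_hM_h\cdots u_1M_1$ with $M_1<\dots<M_h$ the RTL maxima and $u_i$ possibly empty words, $M_0=0$; $\mu(\sigma)=U^{M_1-M_0}D^{|u_1|+1}U^{M_2-M_1}D^{|u_2|+1}\cdots U^{M_h-M_{h-1}}D^{|u_h|+1}$. *)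

(* Defs.v *)
(* Dyck paths are encoded as seq bool: true = U, false = D. *)
From mathcomp Require Import all_boot.
Set Implicit Arguments. Unset Strict Implicit. Unset Printing Implicit Defensive.

Definition is_perm_of (n : nat) (s : seq nat) : bool := perm_eq s (iota 1 n).

Definition avoids123 (s : seq nat) : Prop :=
  ~ exists i j k, [/\ i < j, j < k, k < size s &
                  (nth 0 s i < nth 0 s j) && (nth 0 s j < nth 0 s k)].

(* lam_aux c s : c is the current left-to-right minimum (initially m_0 = n+1).
   A new LTR minimum x contributes U^(c-x) D, any other letter contributes D;
   thus the block for m_i is U^(m_(i-1)-m_i) D^(|w_i|+1). *)
Fixpoint lam_aux (c : nat) (s : seq nat) : seq bool :=
  match s with
  | [::] => [::]
  | x :: s' => if x < c then nseq (c - x) true ++ false :: lam_aux x s'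
               else false :: lam_aux c s'
  end.
Definition lambda (s : seq nat) : seq bool := lam_aux (size s).+1 s.

(* mu: read sigma from right to left; c is the current right-to-left maximum
   (initially M_0 = 0).  A new RTL maximum y contributes U^(y-c) D, any other
   letter contributes D; thus the block for M_i is U^(M_i-M_(i-1)) D^(|u_i|+1). *)
Fixpoint mu_aux (c : nat) (s : seq nat) : seq bool :=
  match s with
  | [::] => [::]
  | x :: s' => if c < x then nseq (x - c) true ++ false :: mu_aux x s'
               else false :: mu_aux c s'
  end.
Definition mu (s : seq nat) : seq bool := mu_aux 0 (rev s).

Fixpoint dyck_aux (h : nat) (p : seq bool) : bool :=
  match p with
  | [::] => h == 0
  | b :: p' => if b then dyck_aux h.+1 p' else (0 < h) && dyck_aux h.-1 p'
  end.
Definition is_dyck (p : seq bool) : bool := dyck_aux 0 p.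

Definition semilength (p : seq bool) : nat := count id p.

Fixpoint comps_aux (h : nat) (cur : seq bool) (p : seq bool) : seq (seq bool) :=
  match p with
  | [::] => if cur is [::] then [::] else [:: cur]
  | b :: p' =>
      let h' := if b then h.+1 else h.-1 in
      let cur' := rcons cur b in
      if h' == 0 then cur' :: comps_aux 0 [::] p' else comps_aux h' cur' p'
  end.
Definition components (p : seq bool) : seq (seq bool) := comps_aux 0 [::] p.

Fixpoint runs (p : seq bool) : seq (bool * nat) :=
  match p with
  | [::] => [::]
  | b :: p' =>
      match runs p' with
      | (c, k) :: r => if c == b then (c, k.+1) :: r else (b, 1) :: (c, k) :: r
      | [::] => [:: (b, 1)]
      end
  end.
Definition ascent_lengths (p : seq bool) : seq nat := [seq x.2 | x <- runs p & x.1].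
Definition descent_lengths (p : seq bool) : seq nat := [seq x.2 | x <- runs p & ~~ x.1].

Definition psums (s : seq nat) : seq nat := [seq sumn (take i.+1 s) | i <- iota 0 (size s)].

(* ascent-descent code: A_1..A_(k-1), D_1..D_(k-1) *)
Definition codeA (p : seq bool) : seq nat :=
  let a := ascent_lengths p in take (size a).-1 (psums a).
Definition codeD (p : seq bool) : seq nat :=
  let d := descent_lengths p in take (size d).-1 (psums d).

Definition diffs (s : seq nat) : seq nat := pairmap (fun x y => y - x) 0 s.
Definition path_of_code (n : nat) (A D : seq nat) : seq bool :=
  flatten [seq nseq x.1 true ++ nseq x.2 false
          | x <- zip (diffs (rcons A n)) (diffs (rcons D n))].

Definition Lprime_irr (p : seq bool) : seq bool :=
  let n := semilength p in
  let A := codeA p in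
  let D := codeD p in
  let hatA := rev [seq i <- iota 1 (n - 2) | i \notin [seq a.-1 | a <- A]] in
  let hatD := rev [seq i <- iota 1 (n - 2) | i \notin D] in
  path_of_code n [seq n - a | a <- hatA] [seq n.-1 - d | d <- hatD].

Definition Lprime (p : seq bool) : seq bool :=
  flatten (rev [seq Lprime_irr q | q <- components p]).

(* Main.v *)
Require Import Defs.
From mathcomp Require Import all_boot zify.
Set Implicit Arguments. Unset Strict Implicit. Unset Printing Implicit Defensive.

Definition blk (bl : seq (nat * nat)) : seq bool :=
  flatten [seq nseq x.1 true ++ nseq x.2 false | x <- bl].

Definition posb (bl : seq (nat * nat)) := all (fun x => (0 < x.1) && (0 < x.2)) bl.

Lemma runs_head c q : exists k r, runs (c :: q) = (c, k) :: r.
Proof.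
rewrite /=; case: (runs q) => [|[c' k] r]; first by exists 1, [::].
case: eqP => [->|_]; first by exists k.+1, r.
by exists 1, ((c', k) :: r).
Qed.

Lemma runs_cons b q : runs (b :: q) =
  match runs q with
  | (c, k) :: r => if c == b then (c, k.+1) :: r else (b, 1) :: (c, k) :: r
  | [::] => [:: (b, 1)]
  end.
Proof. by []. Qed.

Lemma runs_nseq b k q : head (~~ b) q != b ->
  runs (nseq k.+1 b ++ q) = (b, k.+1) :: runs q.
Proof.
move=> Hq; elim: k => [|k IH].
  case: q Hq => [|c q] /= Hq; first by [].
  have [k [r Hr]] := runs_head c q.
  move: Hr => /= ->; by rewrite (negbTE Hq).
rewrite -[nseq k.+2 b ++ q]/(b :: (nseq k.+1 b ++ q)) runs_cons IH /=.
by rewrite eqxx.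
Qed.

Lemma blk_cons x bl : blk (x :: bl) = nseq x.1 true ++ nseq x.2 false ++ blk bl.
Proof. by rewrite /blk /= catA. Qed.

Lemma head_blk bl : posb bl -> head false (blk bl) != false -> True.
Proof. by []. Qed.

Lemma runs_blk bl : posb bl ->
  runs (blk bl) = flatten [seq [:: (true, x.1); (false, x.2)] | x <- bl].
Proof.
elim: bl => [|[a d] bl IH] //= /andP [/andP [Ha Hd] Hbl].
rewrite blk_cons /=.
case: a Ha => // a _; case: d Hd => // d _.
rewrite runs_nseq; last first.
  by case: d.
rewrite runs_nseq; last first.
  case: bl Hbl {IH} => [|[a' d'] bl] //= /andP [/andP [Ha' _] _].
  rewrite blk_cons; by case: a' Ha'.
by rewrite IH.
Qed.

Lemma asc_blk bl : posb bl -> ascent_lengths (blk bl) = map fst bl.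
Proof.
move=> H; rewrite /ascent_lengths runs_blk //.
by elim: bl {H} => [|x bl IH] //=; rewrite IH.
Qed.

Lemma desc_blk bl : posb bl -> descent_lengths (blk bl) = map snd bl.
Proof.
move=> H; rewrite /descent_lengths runs_blk //.
by elim: bl {H} => [|x bl IH] //=; rewrite IH.
Qed.

Lemma psums_cons a l : psums (a :: l) = a :: map (addn a) (psums l).
Proof.
rewrite /psums /= -[1]/(1 + 0) iotaDl -map_comp; congr (_ :: _).
  by rewrite take0 addn0.
by rewrite -map_comp; apply: eq_map => i.
Qed.

Lemma size_psums l : size (psums l) = size l.
Proof. by rewrite /psums size_map size_iota. Qed.

Lemma codeA_cons x bl : posb (x :: bl) -> bl != [::] ->
  codeA (blk (x :: bl)) = x.1 :: map (addn x.1) (codeA (blk bl)).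
Proof.
move=> H Hn; have H' : posb bl by case/andP: H.
rewrite /codeA !asc_blk //= psums_cons size_map.
case: bl Hn {H H'} => [|y bl] //= _.
by rewrite map_take.
Qed.

Lemma codeD_cons x bl : posb (x :: bl) -> bl != [::] ->
  codeD (blk (x :: bl)) = x.2 :: map (addn x.2) (codeD (blk bl)).
Proof.
move=> H Hn; have H' : posb bl by case/andP: H.
rewrite /codeD !desc_blk //= psums_cons size_map.
case: bl Hn {H H'} => [|y bl] //= _.
by rewrite map_take.
Qed.

Lemma codeA_one x : posb [:: x] -> codeA (blk [:: x]) = [::].
Proof. by move=> H; rewrite /codeA asc_blk. Qed.

Lemma codeD_one x : posb [:: x] -> codeD (blk [:: x]) = [::].
Proof. by move=> H; rewrite /codeD desc_blk. Qed.

Lemma codeA_sorted bl : posb bl -> sorted ltn (codeA (blk bl)) && all (leq 1) (codeA (blk bl)).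
Proof.
elim: bl => [|x bl IH] H; first by [].
case: bl IH H => [|y bl] IH H; first by rewrite codeA_one.
rewrite codeA_cons //.
have /andP [Hs Ha] := IH (proj2 (andP H)).
case/andP: H => /andP [Hx _] _.
rewrite /= path_sortedE; last exact: ltn_trans.
rewrite /= Hx /= all_map.
apply/andP; split; first (apply/andP; split).
- apply/allP => z Hz /=; move/allP: Ha => /(_ z Hz); lia.
- by rewrite sorted_map; apply: sub_sorted Hs => a b /=; lia.
- by rewrite all_map; apply/allP => z _ /=; lia.
Qed.

Lemma codeD_sorted bl : posb bl -> sorted ltn (codeD (blk bl)) && all (leq 1) (codeD (blk bl)).
Proof.
elim: bl => [|x bl IH] H; first by [].
case: bl IH H => [|y bl] IH H; first by rewrite codeD_one.
rewrite codeD_cons //.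
have /andP [Hs Ha] := IH (proj2 (andP H)).
case/andP: H => /andP [_ Hx] _.
rewrite /= path_sortedE; last exact: ltn_trans.
rewrite /= Hx /= all_map.
apply/andP; split; first (apply/andP; split).
- apply/allP => z Hz /=; move/allP: Ha => /(_ z Hz); lia.
- by rewrite sorted_map; apply: sub_sorted Hs => a b /=; lia.
- by rewrite all_map; apply/allP => z _ /=; lia.
Qed.

Definition poc2 (N M : nat) (A D : seq nat) : seq bool :=
  blk (zip (diffs (rcons A N)) (diffs (rcons D M))).

Lemma poc_poc2 n A D : path_of_code n A D = poc2 n n A D.
Proof. by []. Qed.

Lemma pairmap_shift t a l :
  pairmap (fun x y => y - x) (t + a) (map (addn t) l) = pairmap (fun x y => y - x) a l.
Proof.
elim: l a => [|y l IH] a //=; rewrite -IH; congr (_ :: _); lia.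
Qed.

Lemma diffs_shift x l : diffs (x :: map (addn x) l) = x :: diffs l.
Proof.
rewrite /diffs /= subn0; congr (_ :: _).
by rewrite -{1}[x]addn0 pairmap_shift.
Qed.

Lemma recon_blk bl : posb bl -> bl != [::] ->
  blk bl = poc2 (sumn (map fst bl)) (sumn (map snd bl)) (codeA (blk bl)) (codeD (blk bl)).
Proof.
elim: bl => [|x bl IH] // H _.
case: bl IH H => [|y bl] IH H.
  by rewrite codeA_one // codeD_one // /poc2 /= !addn0 !subn0.
have Hp : posb (y :: bl) by case/andP: H.
rewrite codeA_cons // codeD_cons // /poc2.
rewrite [map fst _]/= [map snd _]/= [sumn (x.1 :: _)]/= [sumn (x.2 :: _)]/=.
rewrite !rcons_cons -!(map_rcons (addn _)) !diffs_shift /=.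
transitivity (nseq x.1 true ++ nseq x.2 false ++ blk (y :: bl)); first exact: blk_cons.
rewrite [in LHS]IH // /poc2 [zip _ _]/=.
by rewrite (blk_cons (x.1, x.2)).
Qed.

Definition sf (us : seq nat) : seq bool := flatten [seq nseq u true ++ [:: false] | u <- us].

Fixpoint sbl_aux (u d : nat) (us : seq nat) : seq (nat * nat) :=
  match us with
  | [::] => [:: (u, d)]
  | v :: us' => if 0 < v then (u, d) :: sbl_aux v 1 us' else sbl_aux u d.+1 us'
  end.

Lemma nseq_false_cons d l : nseq d false ++ false :: l = nseq d.+1 false ++ l.
Proof. by elim: d => //= d ->. Qed.

Lemma sf_cons v us : sf (v :: us) = nseq v true ++ false :: sf us.
Proof. by rewrite /sf /= -catA. Qed.

Lemma sf_sbl u d us : nseq u true ++ nseq d false ++ sf us = blk (sbl_aux u d us).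
Proof.
elim: us u d => [|v us IH] u d /=; first by rewrite /blk /= !cats0.
rewrite sf_cons; case: ifP => Hv.
  by rewrite blk_cons -IH.
case: v Hv => // _ /=.
by rewrite -IH nseq_false_cons.
Qed.

Lemma sbl_pos u d us : 0 < u -> 0 < d -> posb (sbl_aux u d us).
Proof.
elim: us u d => [|v us IH] u d Hu Hd /=; first by rewrite Hu Hd.
case: ifP => Hv /=; first by rewrite Hu Hd IH.
by apply: IH.
Qed.

Lemma sbl_nil u d us : sbl_aux u d us != [::].
Proof. elim: us u d => [|v us IH] u d //=; by case: ifP. Qed.

Lemma sbl_fst u d us : sumn (map fst (sbl_aux u d us)) = u + sumn us.
Proof.
elim: us u d => [|v us IH] u d /=; first by rewrite !addn0.
case: ifP => Hv /=; first by rewrite IH.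
by rewrite IH; case: v Hv.
Qed.

Lemma sbl_snd u d us : sumn (map snd (sbl_aux u d us)) = d + size us.
Proof.
elim: us u d => [|v us IH] u d /=; first by rewrite !addn0.
case: ifP => Hv /=; first by rewrite IH; lia.
by rewrite IH; lia.
Qed.

Lemma iotaS0 k : iota 0 k.+1 = 0 :: map (addn 1) (iota 0 k).
Proof. by rewrite -iotaDl. Qed.

Lemma filt_shift (P : pred nat) (f : nat -> nat) l :
  [seq f i | i <- [seq 1 + i | i <- l & preim (addn 1) P i]] =
  [seq f i.+1 | i <- l & P i.+1].
Proof. by rewrite -map_comp. Qed.

Lemma codeA_sbl u d us : 0 < u -> 0 < d ->
  codeA (blk (sbl_aux u d us)) =
  (if has (leq 1) us then [:: u] else [::]) ++
  [seq u + sumn (take i.+1 us) | i <- iota 0 (size us) &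
     (0 < nth 0 us i) && has (leq 1) (drop i.+1 us)].
Proof.
elim: us u d => [|v us IH] u d Hu Hd; first by rewrite /= codeA_one //= Hu Hd.
rewrite [sbl_aux _ _ _]/= [size _]/= iotaS0 /=.
rewrite filter_map.
case: v => [|v].
  rewrite /= IH //; congr (_ ++ _); rewrite -map_comp.
  have -> : [seq x <- iota 0 (size us) | preim (addn 1)
            (fun i : nat => (0 < nth 0 (0 :: us) i) && has (leq 1) (drop i us)) x] =
            [seq x <- iota 0 (size us) | (0 < nth 0 us x) && has (leq 1) (drop x.+1 us)].
    by apply: eq_filter => i.
  by apply: eq_map => i.
have Hp : posb ((u, d) :: sbl_aux v.+1 1 us) by rewrite /= Hu Hd sbl_pos.
rewrite !ltn0Sn codeA_cons ?sbl_nil // IH // /= drop0.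
rewrite !(map_cat, filt_shift) /= -!map_comp.
have -> : [seq x <- iota 0 (size us) | preim (addn 1)
            (fun i : nat => (0 < nth 0 (v.+1 :: us) i) && has (leq 1) (drop i us)) x] =
            [seq x <- iota 0 (size us) | (0 < nth 0 us x) && has (leq 1) (drop x.+1 us)].
  by apply: eq_filter => i.
congr (_ :: _); case: (has (leq 1) us) => /=; rewrite -?map_comp.
  congr (_ :: _); first by rewrite take0 /= addn0.
  by apply: eq_map => i /=.
Qed.

Lemma codeD_sbl u d us : 0 < u -> 0 < d ->
  codeD (blk (sbl_aux u d us)) =
  [seq d + i | i <- iota 0 (size us) & 0 < nth 0 us i].
Proof.
elim: us u d => [|v us IH] u d Hu Hd; first by rewrite /= codeD_one //= Hu Hd.
rewrite [sbl_aux _ _ _]/= [size _]/= iotaS0 /=.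
rewrite filter_map.
have -> : [seq x <- iota 0 (size us) | preim (addn 1)
            (fun i : nat => (0 < nth 0 (v :: us) i)) x] =
            [seq x <- iota 0 (size us) | (0 < nth 0 us x)].
  by apply: eq_filter => i.
case: v => [|v].
  by rewrite /= IH // -map_comp; apply: eq_map => i /=; lia.
have Hp : posb ((u, d) :: sbl_aux v.+1 1 us) by rewrite /= Hu Hd sbl_pos.
rewrite !ltn0Sn codeD_cons ?sbl_nil // IH // /= addn0.
by congr (_ :: _).
Qed.

Lemma sf_blk u us : sf (u :: us) = blk (sbl_aux u 1 us).
Proof. by rewrite -sf_sbl sf_cons. Qed.

Lemma memA_sf u us v : 0 < u ->
  (v \in codeA (sf (u :: us))) <->
  exists j, [/\ j < (size us).+1, 0 < nth 0 (u :: us) j,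
     has (leq 1) (drop j.+1 (u :: us)) & v = sumn (take j.+1 (u :: us))].
Proof.
move=> Hu; rewrite sf_blk codeA_sbl // mem_cat; split.
  case/orP.
    case: ifP => // Hh; rewrite inE => /eqP ->.
    by exists 0; rewrite /= drop0 take0 addn0.
  case/mapP => i; rewrite mem_filter mem_iota => /andP [/andP [H1 H2] /andP [_ H3]] ->.
  by exists i.+1.
case => [[|i] [Hj H1 H2 ->]].
  by apply/orP; left; move: H2 => /=; rewrite drop0 take0 addn0 => ->; rewrite inE.
apply/orP; right; apply/mapP; exists i => //.
by rewrite mem_filter mem_iota /= H1 H2 /=.
Qed.

Lemma memD_sf u us v : 0 < u ->
  (v \in codeD (sf (u :: us))) <->
  [/\ 0 < v, v < (size us).+1 & 0 < nth 0 (u :: us) v].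
Proof.
move=> Hu; rewrite sf_blk codeD_sbl //; split.
  case/mapP => i; rewrite mem_filter mem_iota => /andP [H1 /andP [_ H3]] ->.
  by rewrite add1n.
case: v => [|i] [// _ Hj H1].
apply/mapP; exists i => //.
by rewrite mem_filter mem_iota /= H1 /=.
Qed.

Lemma sortedA_sf u us : 0 < u -> sorted ltn (codeA (sf (u :: us))).
Proof. by move=> Hu; rewrite sf_blk; case/andP: (codeA_sorted (sbl_pos us Hu (ltn0Sn 0))). Qed.

Lemma sortedD_sf u us : 0 < u -> sorted ltn (codeD (sf (u :: us))).
Proof. by move=> Hu; rewrite sf_blk; case/andP: (codeD_sorted (sbl_pos us Hu (ltn0Sn 0))). Qed.

Lemma recon_sf u us : 0 < u ->
  sf (u :: us) = poc2 (u + sumn us) (1 + size us) (codeA (sf (u :: us))) (codeD (sf (u :: us))).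
Proof.
move=> Hu; rewrite sf_blk -(sbl_fst u 1 us) -(sbl_snd u 1 us).
exact: recon_blk (sbl_pos us Hu (ltn0Sn 0)) (sbl_nil _ _ _).
Qed.

Lemma semilength_sf us : semilength (sf us) = sumn us.
Proof.
elim: us => [|v us IH] //; rewrite sf_cons /semilength count_cat count_nseq /=.
by rewrite -/(semilength _) IH mul1n.
Qed.

Fixpoint lus (c : nat) (s : seq nat) : seq nat :=
  match s with
  | [::] => [::]
  | x :: s' => if x < c then (c - x) :: lus x s' else 0 :: lus c s'
  end.

Lemma lam_sf c s : lam_aux c s = sf (lus c s).
Proof.
elim: s c => [|x s IH] c //=; case: ifP => _; by rewrite sf_cons IH.
Qed.

Lemma size_lus c s : size (lus c s) = size s.
Proof. elim: s c => [|x s IH] c //=; case: ifP => _ /=; by rewrite IH. Qed.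

Definition ltrmin (s : seq nat) (i : nat) := all (fun k => nth 0 s i < nth 0 s k) (iota 0 i).

Lemma ltrminP s i : reflect (forall k, k < i -> nth 0 s i < nth 0 s k) (ltrmin s i).
Proof.
apply: (iffP allP) => H k Hk.
  by apply: H; rewrite mem_iota.
by apply: H; move: Hk; rewrite mem_iota.
Qed.

Lemma ltrmin_cons x s k : ltrmin (x :: s) k.+1 = (nth 0 s k < x) && ltrmin s k.
Proof. by rewrite /ltrmin iotaS0 /= all_map. Qed.

Lemma pos_lus c s i : i < size s ->
  (0 < nth 0 (lus c s) i) = (nth 0 s i < c) && ltrmin s i.
Proof.
elim: s c i => [|x s IH] c [|i] //= Hi.
  rewrite /ltrmin /= andbT; case: ifP => /= H; rewrite ?subn_gt0 // ltnn.
rewrite ltrmin_cons.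
case: ifP => H /=; rewrite IH //; case: (ltrmin s i); rewrite ?andbT ?andbF //;
  apply/idP/idP; lia.
Qed.

Lemma sum_lus c s i : i < size s -> 0 < nth 0 (lus c s) i ->
  sumn (take i.+1 (lus c s)) = c - nth 0 s i.
Proof.
elim: s c i => [|x s IH] c [|i] // Hi Hp.
  move: Hp => /=; case: ifP => /= H Hp; rewrite take0 /= addn0 //; lia.
have := Hp; rewrite pos_lus // ltrmin_cons => /andP [H1 /andP [H2 _]].
move: Hp => /=; case: ifP => H Hp /=; rewrite IH //; lia.
Qed.

Lemma fmin_le c s : foldl minn c s <= c.
Proof. elim: s c => [|x s IH] c //=; apply: leq_trans (IH _) _; lia. Qed.

Lemma fmin_mem c s y : y \in s -> foldl minn c s <= y.
Proof.
elim: s c => [|x s IH] c //=; rewrite inE => /orP [/eqP ->|H].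
  apply: leq_trans (fmin_le _ _) _; lia.
exact: IH.
Qed.

Lemma fmin_ge c s m : (forall y, y \in s -> m <= y) -> m <= c -> m <= foldl minn c s.
Proof.
elim: s c => [|x s IH] c //= H Hc; apply: IH.
  by move=> y Hy; apply: H; rewrite inE Hy orbT.
have := H x (mem_head _ _); lia.
Qed.

Lemma fmax_ge c s : c <= foldl maxn c s.
Proof. elim: s c => [|x s IH] c //=; apply: leq_trans (IH _); lia. Qed.

Lemma fmax_mem c s y : y \in s -> y <= foldl maxn c s.
Proof.
elim: s c => [|x s IH] c //=; rewrite inE => /orP [/eqP ->|H].
  apply: leq_trans (fmax_ge _ _); lia.
exact: IH.
Qed.

Lemma fmax_le c s m : (forall y, y \in s -> y <= m) -> c <= m -> foldl maxn c s <= m.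
Proof.
elim: s c => [|x s IH] c //= H Hc; apply: IH.
  by move=> y Hy; apply: H; rewrite inE Hy orbT.
have := H x (mem_head _ _); lia.
Qed.

Lemma sumn_lus c s : sumn (lus c s) = c - foldl minn c s.
Proof.
elim: s c => [|x s IH] c /=; first by rewrite subnn.
case: ifP => H /=; rewrite IH.
  have -> : minn c x = x by lia.
  have := fmin_le x s; lia.
have -> : minn c x = c by lia.
by [].
Qed.

Lemma mu_lam c N s : c <= N -> all (fun x => x <= N) s ->
  mu_aux c s = lam_aux (N - c) (map (fun x => N - x) s).
Proof.
elim: s c => [|x s IH] c //= Hc /andP [Hx Hs].
case: ifP => H1; case: ifP => H2; try lia.
  rewrite IH //; congr (nseq _ _ ++ _); lia.
by rewrite IH.
Qed.

Lemma lam_shift t c s : lam_aux (t + c) (map (addn t) s) = lam_aux c s.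
Proof.
elim: s c => [|x s IH] c //=.
rewrite ltn_add2l; case: ifP => H; rewrite IH //.
by rewrite subnDl.
Qed.

Lemma mu_shift t c s : mu_aux (t + c) (map (addn t) s) = mu_aux c s.
Proof.
elim: s c => [|x s IH] c //=.
rewrite ltn_add2l; case: ifP => H; rewrite IH //.
by rewrite subnDl.
Qed.

Lemma lam_cat c s1 s2 : lam_aux c (s1 ++ s2) = lam_aux c s1 ++ lam_aux (foldl minn c s1) s2.
Proof.
elim: s1 c => [|x s1 IH] c //=; case: ifP => H; rewrite IH /= -?catA //.
  by have -> : minn c x = x by lia.
by have -> : minn c x = c by lia.
Qed.

Lemma mu_cat c s1 s2 : mu_aux c (s1 ++ s2) = mu_aux c s1 ++ mu_aux (foldl maxn c s1) s2.
Proof.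
elim: s1 c => [|x s1 IH] c //=; case: ifP => H; rewrite IH /= -?catA //.
  by have -> : maxn c x = x by lia.
by have -> : maxn c x = c by lia.
Qed.

Fixpoint ret_at_end (h : nat) (p : seq bool) : bool :=
  match p with
  | [::] => false
  | b :: p' => let h' := if b then h.+1 else h.-1 in
               if h' == 0 then p' == [::] else ret_at_end h' p'
  end.

Lemma comps_ret h cur p q : ret_at_end h p ->
  comps_aux h cur (p ++ q) = (cur ++ p) :: comps_aux 0 [::] q.
Proof.
elim: p h cur => [|b p IH] h cur //=.
case: ifP => H.
  by move/eqP => ->; rewrite cats1.
by move=> Hr; rewrite IH // cat_rcons.
Qed.

Lemma ret_nseq h u q : ret_at_end h (nseq u true ++ q) = ret_at_end (h + u) q.
Proof. elim: u h => [|u IH] h /=; first by rewrite addn0. by rewrite IH addnS. Qed.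

Lemma ret_false h L : ret_at_end h (false :: L) =
  if h.-1 == 0 then L == [::] else ret_at_end h.-1 L.
Proof. by []. Qed.

Lemma ret_lam h c s : s != [::] ->
  (forall k, 0 < k < size s -> k < h + c - foldl minn c (take k s)) ->
  h + c = foldl minn c s + size s ->
  ret_at_end h (lam_aux c s).
Proof.
elim: s h c => [|x s IH] h c // _ Hk He.
have Hl : lam_aux c (x :: s) = nseq (c - minn c x) true ++ false :: lam_aux (minn c x) s.
  rewrite /=; case: ifP => H.
    by have -> : minn c x = x by lia.
  have -> : minn c x = c by lia.
  by rewrite subnn.
rewrite Hl ret_nseq ret_false.
have Hm := fmin_le (minn c x) s.
case: s IH Hk He Hl Hm => [|y s] IH Hk He Hl Hm.
  move: He => /=; case: eqP => //; lia.
have H1 := Hk 1 isT; move: H1; rewrite /= => H1.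
case: eqP => Hz; first lia.
apply: IH => //.
  move=> k /andP [Hk0 Hks].
  have := Hk k.+1; rewrite ltn0Sn /= ltnS Hks => /(_ isT).
  have := fmin_le (minn c x) (take k (y :: s)); lia.
move: He => /=; lia.
Qed.

Section Perm.
Variables (n : nat) (B : seq nat).
Hypothesis HB : perm_eq B (iota 1 n).

Lemma psize : size B = n.
Proof. by rewrite (perm_size HB) size_iota. Qed.

Lemma puniq : uniq B.
Proof. by rewrite (perm_uniq HB) iota_uniq. Qed.

Lemma pmem x : (x \in B) = (0 < x <= n).
Proof. by rewrite (perm_mem HB) mem_iota; apply/idP/idP; lia. Qed.

Lemma pval i : i < n -> 0 < nth 0 B i <= n.
Proof. by move=> Hi; rewrite -pmem mem_nth // psize. Qed.

Lemma pidx v : 0 < v <= n -> exists2 i, i < n & nth 0 B i = v.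
Proof.
move=> Hv; exists (index v B); first by rewrite -psize index_mem pmem.
by rewrite nth_index // pmem.
Qed.

Lemma pinj i j : i < n -> j < n -> nth 0 B i = nth 0 B j -> i = j.
Proof.
move=> Hi Hj /eqP; rewrite nth_uniq ?psize //; last exact: puniq.
by move/eqP.
Qed.

Lemma pmin : 0 < n -> foldl minn n.+1 B = 1.
Proof.
move=> Hn; apply/eqP; rewrite eqn_leq; apply/andP; split.
  by apply: fmin_mem; rewrite pmem; lia.
apply: fmin_ge => //; move=> y; rewrite pmem; lia.
Qed.

Lemma pmax : foldl maxn 0 B = n.
Proof.
apply/eqP; rewrite eqn_leq; apply/andP; split.
  by apply: fmax_le => // y; rewrite pmem; lia.
case En: n => [|m]; first by [].
rewrite -En; apply: fmax_mem; rewrite pmem En; lia.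
Qed.

Lemma lus_cons : 0 < n -> exists x B', B = x :: B' /\
  lus n.+1 B = (n.+1 - x) :: lus x B' /\ 0 < n.+1 - x.
Proof.
move=> Hn; case E: B => [|x B']; first by move: psize; rewrite E /=; lia.
have Hx : x <= n by have := pval Hn; rewrite E /=; lia.
exists x, B'; split => //; split; last lia.
by rewrite /=; have -> : x < n.+1 by lia.
Qed.

Lemma has_drop (us : seq nat) j :
  has (leq 1) (drop j.+1 us) <-> exists k, j < k < size us /\ 0 < nth 0 us k.
Proof.
split.
  case/(has_nthP 0) => i; rewrite size_drop nth_drop => Hi Hp.
  exists (j.+1 + i); split => //; lia.
case=> k [Hk Hp]; apply/(has_nthP 0); exists (k - j.+1).
  rewrite size_drop; lia.
by rewrite nth_drop; have -> : j.+1 + (k - j.+1) = k by lia.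
Qed.

Lemma memA_lam v : 0 < n ->
  (v \in codeA (lam_aux n.+1 B)) <->
  exists j, [/\ j < n, ltrmin B j, (exists k, j < k < n /\ ltrmin B k) & v = n.+1 - nth 0 B j].
Proof.
move=> Hn; have [x [B' [EB [El Hu]]]] := lus_cons Hn.
rewrite lam_sf El memA_sf // -El.
have Hs : (size (lus x B')).+1 = n by rewrite -psize EB /= size_lus.
have Hsz : size (lus n.+1 B) = n by rewrite size_lus psize.
split.
  case=> j [Hj Hp Hh ->]; rewrite Hs in Hj.
  move: Hp; rewrite pos_lus ?psize // => /andP [_ Hl].
  exists j; split.
  - by [].
  - by [].
  - case/has_drop: Hh => k [Hk Hk2]; exists k; split; first by rewrite -Hsz.
    move: Hk2; rewrite Hsz in Hk; rewrite pos_lus ?psize; first by case/andP.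
    by case/andP: Hk.
  - rewrite sum_lus ?psize // pos_lus ?psize // Hl andbT.
    by have := pval Hj; lia.
case=> j [Hj Hl [k [Hk Hlk]] ->]; exists j.
have Hpj : 0 < nth 0 (lus n.+1 B) j.
  by rewrite pos_lus ?psize // Hl andbT; have := pval Hj; lia.
split.
- by rewrite Hs.
- exact: Hpj.
- apply/has_drop; exists k; split; first by rewrite Hsz.
  rewrite pos_lus ?psize; last by case/andP: Hk.
  rewrite Hlk andbT.
  by have := pval (proj2 (andP Hk)); lia.
- by rewrite sum_lus ?psize.
Qed.

Lemma memD_lam v : 0 < n ->
  (v \in codeD (lam_aux n.+1 B)) <-> [/\ 0 < v, v < n & ltrmin B v].
Proof.
move=> Hn; have [x [B' [EB [El Hu]]]] := lus_cons Hn.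
rewrite lam_sf El memD_sf // -El.
have Hs : (size (lus x B')).+1 = n by rewrite -psize EB /= size_lus.
rewrite Hs; split; case=> H1 H2 H3; split; try by [].
  by move: H3; rewrite pos_lus ?psize //; case/andP.
rewrite pos_lus ?psize // H3 andbT.
by have := pval H2; lia.
Qed.

Lemma sortedA_lam : 0 < n -> sorted ltn (codeA (lam_aux n.+1 B)).
Proof.
move=> Hn; have [x [B' [EB [El Hu]]]] := lus_cons Hn.
by rewrite lam_sf El sortedA_sf.
Qed.

Lemma sortedD_lam : 0 < n -> sorted ltn (codeD (lam_aux n.+1 B)).
Proof.
move=> Hn; have [x [B' [EB [El Hu]]]] := lus_cons Hn.
by rewrite lam_sf El sortedD_sf.
Qed.

Lemma semilength_lam : 0 < n -> semilength (lam_aux n.+1 B) = n.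
Proof.
move=> Hn; rewrite lam_sf semilength_sf sumn_lus pmin //; lia.
Qed.

Lemma recon_lam : 0 < n ->
  lam_aux n.+1 B = path_of_code n (codeA (lam_aux n.+1 B)) (codeD (lam_aux n.+1 B)).
Proof.
move=> Hn; have [x [B' [EB [El Hu]]]] := lus_cons Hn.
rewrite lam_sf El {1}recon_sf //.
have H1 : n.+1 - x + sumn (lus x B') = n.
  by have := sumn_lus n.+1 B; rewrite El /= pmin // => ->; lia.
have H2 : 1 + size (lus x B') = n by rewrite size_lus -psize EB.
by rewrite H1 H2.
Qed.

End Perm.

Definition rtlmax (s : seq nat) (i : nat) :=
  all (fun k => nth 0 s k < nth 0 s i) (iota i.+1 (size s - i.+1)).

Lemma rtlmaxP s i : reflect (forall k, i < k < size s -> nth 0 s k < nth 0 s i) (rtlmax s i).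
Proof.
apply: (iffP allP) => H k Hk.
  apply: H; rewrite mem_iota; lia.
by apply: H; move: Hk; rewrite mem_iota; lia.
Qed.

Definition irr (n : nat) (B : seq nat) :=
  forall k, 0 < k < n -> ~~ all (fun x => n - k < x) (take k B).

Section Core.
Variables (n : nat) (B : seq nat).
Hypothesis HB : perm_eq B (iota 1 n).

Definition tau := map (fun x => n.+1 - x) (rev B).

Lemma tau_perm : perm_eq tau (iota 1 n).
Proof.
apply: uniq_perm; last first.
- move=> y; rewrite mem_iota; apply/mapP/idP.
    case=> x; rewrite mem_rev (pmem HB) => Hx ->; lia.
  move=> Hy; exists (n.+1 - y); last lia.
  by rewrite mem_rev (pmem HB); lia.
- exact: iota_uniq.
rewrite map_inj_in_uniq ?rev_uniq ?(puniq HB) //.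
move=> a b; rewrite !mem_rev !(pmem HB); lia.
Qed.

Lemma nth_tau i : i < n -> nth 0 tau i = n.+1 - nth 0 B (n - i.+1).
Proof.
move=> Hi; rewrite /tau (nth_map 0); last by rewrite size_rev (psize HB).
by rewrite nth_rev (psize HB).
Qed.

Lemma ltr_tau i : i < n -> ltrmin tau i = rtlmax B (n - i.+1).
Proof.
move=> Hi; apply/ltrminP/rtlmaxP; rewrite (psize HB).
  move=> H k Hk.
  have Hk' : n - k.+1 < i by lia.
  have := H _ Hk'; rewrite !nth_tau; try lia.
  have -> : n - (n - k.+1).+1 = k by lia.
  have := pval HB (_ : k < n); have := pval HB (_ : n - i.+1 < n).
  move=> /(_ ltac:(lia)) H1 /(_ ltac:(lia)) H2; lia.
move=> H k Hk.
have Hk' : n - i.+1 < n - k.+1 < n by lia.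
have := H _ Hk'; rewrite !nth_tau; try lia.
have := pval HB (_ : n - k.+1 < n); have := pval HB (_ : n - i.+1 < n).
move=> /(_ ltac:(lia)) H1 /(_ ltac:(lia)) H2; lia.
Qed.

Lemma mu_tau : mu B = lam_aux n.+1 tau.
Proof.
rewrite /mu (mu_lam (N := n.+1)) // ?subn0 //.
apply/allP => x; rewrite mem_rev (pmem HB); lia.
Qed.

Lemma ltr_one p : p < n -> nth 0 B p = 1 -> ltrmin B p.
Proof.
move=> Hp Hv; apply/ltrminP => k Hk.
have := pval HB (_ : k < n) => /(_ ltac:(lia)) Hb.
rewrite Hv; case: (ltngtP 1 (nth 0 B k)) => // H; first lia.
have := pinj HB (_ : k < n) Hp => /(_ ltac:(lia)); rewrite Hv -H => /(_ erefl); lia.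
Qed.

Lemma rtl_n q : q < n -> nth 0 B q = n -> rtlmax B q.
Proof.
move=> Hq Hv; apply/rtlmaxP => k; rewrite (psize HB) => Hk.
have := pval HB (_ : k < n) => /(_ ltac:(lia)) Hb.
rewrite Hv; case: (ltngtP (nth 0 B k) n) => // H; first lia.
have := pinj HB (_ : k < n) Hq => /(_ ltac:(lia)); rewrite Hv H => /(_ erefl); lia.
Qed.

Hypothesis Hav : avoids123 B.

Lemma K1 i : i < n -> ~~ ltrmin B i -> rtlmax B i.
Proof.
move=> Hi /allPn [k]; rewrite mem_iota add0n => /andP [_ Hk] /= Hnk.
apply/rtlmaxP => l; rewrite (psize HB) => /andP [Hil Hl].
rewrite ltnNge; apply/negP => Hle.
apply: Hav; exists k, i, l; split => //; first by rewrite (psize HB).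
have Hki : nth 0 B k != nth 0 B i.
  by apply/eqP => /(pinj HB) => /(_ ltac:(lia) Hi); lia.
have Hil' : nth 0 B i != nth 0 B l.
  by apply/eqP => /(pinj HB) => /(_ Hi Hl); lia.
apply/andP; split; move: Hki Hil' Hnk Hle; lia.
Qed.

Hypothesis Hirr : irr n B.

Lemma K2 i : 1 < n -> i < n -> ltrmin B i -> rtlmax B i -> False.
Proof.
move=> Hn Hi /ltrminP Hl /rtlmaxP Hr.
set v := nth 0 B i.
have Hv : n - i <= v.
  have Hsub : {subset drop i.+1 B <= iota 1 v.-1}.
    move=> y /(nthP 0) [m]; rewrite size_drop nth_drop (psize HB) => Hm <-.
    rewrite mem_iota.
    have := Hr (i.+1 + m); rewrite (psize HB) => /(_ ltac:(lia)) H1.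
    rewrite /v; have := pval HB (_ : i.+1 + m < n) => /(_ ltac:(lia)).
    set a := nth 0 B (i.+1 + m) in H1 *; set b := nth 0 B i in H1 *; lia.
  have := uniq_leq_size (drop_uniq i.+1 (puniq HB)) Hsub.
  rewrite size_drop size_iota (psize HB); have := pval HB Hi; rewrite -/v; lia.
set k := if i == 0 then 1 else i.
have Hk : 0 < k < n by rewrite /k; case: eqP; lia.
apply: (negP (Hirr Hk)); apply/allP => y /(nthP 0) [m].
rewrite size_take (psize HB) (_ : k < n) ?(proj2 (andP Hk)) // => Hm.
rewrite nth_take // => <-.
move: Hm; rewrite /k; case: eqP => Hi0 Hm.
  have -> : m = 0 by lia.
  move: Hv; rewrite /v Hi0 subn0 => Hv'; apply: leq_trans Hv'; lia.
exact: leq_ltn_trans Hv (Hl m Hm).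
Qed.

End Core.

Lemma sorted_revsub a l : sorted ltn l -> all (fun x => x <= a) l ->
  sorted ltn (map (fun x => a - x) (rev l)).
Proof.
move=> Hs Ha; rewrite sorted_map rev_sorted.
apply: (sub_in_sorted (P := fun x => x <= a)) Ha Hs.
move=> x y Hx Hy /= Hxy; move: Hx Hy; rewrite /in_mem /=; lia.
Qed.

Lemma core n B : 0 < n -> perm_eq B (iota 1 n) -> avoids123 B -> irr n B ->
  mu B = Lprime_irr (lambda B).
Proof.
move=> Hn HB Hav Hirr.
case: (ltngtP n 1) => Hn1; first lia; last first.
  subst n; case: B HB Hav Hirr => [|x [|y B]] HB _ _; try by have := psize HB.
  have := pmem HB x; rewrite mem_head => /esym Hx.
  by have -> : x = 1 by lia.
rewrite /lambda (psize HB) (mu_tau HB) /Lprime_irr (semilength_lam HB Hn).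
rewrite {1}(recon_lam (tau_perm HB) Hn).
have Ht := tau_perm HB.
have Hpv := pval HB.
congr (path_of_code _ _ _); apply: (irr_sorted_eq ltn_trans ltnn).
- exact: sortedA_lam Ht Hn.
- apply: sorted_revsub; first (apply: sorted_filter; [exact: ltn_trans | exact: iota_ltn_sorted]).
  by apply/allP => i; rewrite mem_filter mem_iota; lia.
- move=> x; apply/idP/idP.
  + case/(memA_lam Ht x Hn) => j [Hj Hlj [k [Hk Hlk]] ->].
    rewrite (ltr_tau HB Hj) in Hlj; rewrite (ltr_tau HB (proj2 (andP Hk))) in Hlk.
    rewrite (nth_tau HB Hj).
    set i := n - j.+1 in Hlj *.
    have Hi : i < n by rewrite /i; lia.
    have Hvi := Hpv i Hi.
    have -> : n.+1 - (n.+1 - nth 0 B i) = nth 0 B i by lia.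
    have Hne1 : nth 0 B i != 1.
      apply/eqP => E; apply: (K2 HB Hirr Hn1 Hi _ Hlj); apply: (ltr_one HB Hi); exact: E.
    have Hltn : nth 0 B i < n.
      move/rtlmaxP: Hlk; rewrite (psize HB) => /(_ i ltac:(rewrite /i; lia)).
      have := Hpv (n - k.+1) ltac:(lia); lia.
    apply/mapP; exists (n - nth 0 B i); last lia.
    rewrite mem_rev mem_filter mem_iota; apply/andP; split; last first.
      by move: Hne1; lia.
    apply/mapP => [[a /(memA_lam HB a Hn) [j' [Hj' Hlj' _ ->]] E]].
    have E' : nth 0 B j' = nth 0 B i by have := Hpv j' Hj'; lia.
    have := pinj HB Hj' Hi E' => Ej; subst j'.
    by apply: (K2 HB Hirr Hn1 Hi).
  + case/mapP => a; rewrite mem_rev mem_filter mem_iota => /andP [Hna Ha] ->.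
    have [i Hi Ei] := @pidx n B HB (n - a) ltac:(lia).
    have Hnl : ~~ ltrmin B i.
      apply/negP => Hl; move/negP: Hna; apply; apply/mapP.
      have [p Hp Ep] := @pidx n B HB 1 ltac:(lia).
      exists (n.+1 - nth 0 B i); last lia.
      apply/(memA_lam HB _ Hn); exists i; split; [exact: Hi | exact: Hl | | by []].
      exists p; split; last by apply: (ltr_one HB Hp); exact: Ep.
      rewrite Hp andbT.
      case: (ltngtP i p) => Hip; first by [].
        by move/ltrminP: Hl => /(_ p Hip); lia.
      subst p; lia.
    have Hr := K1 HB Hav Hi Hnl.
    have [q Hq Eq] := @pidx n B HB n ltac:(lia).
    have Hqi : q < i.
      case: (ltngtP q i) => // Hqi.
        by move/rtlmaxP: Hr; rewrite (psize HB) => /(_ q ltac:(lia)); lia.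
      subst q; lia.
    have Hj : n - i.+1 < n by lia.
    have Ej : n - (n - i.+1).+1 = i by lia.
    have Hk : n - q.+1 < n by lia.
    have Ek : n - (n - q.+1).+1 = q by lia.
    apply/(memA_lam Ht _ Hn); exists (n - i.+1); split.
    * exact: Hj.
    * by rewrite (ltr_tau HB Hj) Ej.
    * exists (n - q.+1); split; first lia.
      by rewrite (ltr_tau HB Hk) Ek; apply: (rtl_n HB Hq).
    * rewrite (nth_tau HB Hj) Ej Ei; lia.
- exact: sortedD_lam Ht Hn.
- apply: sorted_revsub; first (apply: sorted_filter; [exact: ltn_trans | exact: iota_ltn_sorted]).
  by apply/allP => i; rewrite mem_filter mem_iota; lia.
- move=> x; apply/idP/idP.
  + case/(memD_lam Ht x Hn) => [H0 Hx Hl].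
    rewrite (ltr_tau HB Hx) in Hl.
    have Hi : n - x.+1 < n by lia.
    have Hi0 : 0 < n - x.+1.
      case: (posnP (n - x.+1)) => Hi0 //; exfalso.
      move: Hl; rewrite Hi0 => Hl.
      by apply: (K2 HB Hirr Hn1 (_ : 0 < n)) Hl.
    have Hnl : ~~ ltrmin B (n - x.+1).
      by apply/negP => H; apply: (K2 HB Hirr Hn1 Hi H Hl).
    apply/mapP; exists (n - x.+1); last lia.
    rewrite mem_rev mem_filter mem_iota; apply/andP; split; last lia.
    apply/negP => /(memD_lam HB _ Hn) [_ _ H].
    by rewrite H in Hnl.
  + case/mapP => d; rewrite mem_rev mem_filter mem_iota => /andP [Hnd Hd] ->.
    have Hd' : d < n by lia.
    have Hnl : ~~ ltrmin B d.
      apply/negP => H; move/negP: Hnd; apply; apply/(memD_lam HB d Hn).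
      split; [lia | lia | exact: H].
    have Hr := K1 HB Hav Hd' Hnl.
    apply/(memD_lam Ht _ Hn); split; [lia | lia | ].
    have Hx : n.-1 - d < n by lia.
    have E : n - (n.-1 - d).+1 = d by lia.
    by rewrite (ltr_tau HB Hx) E.
Qed.

Lemma ret_block b B : 0 < b -> perm_eq B (iota 1 b) -> irr b B -> ret_at_end 0 (lambda B).
Proof.
move=> Hb HB Hirr; rewrite /lambda (psize HB).
apply: ret_lam.
- by case: B HB Hirr => [|x B] HB //; move: (psize HB) => /= E; lia.
- move=> k Hk; rewrite (psize HB) in Hk.
  case/allPn: (Hirr k Hk) => x Hx /= Hxk.
  have := fmin_mem b.+1 Hx; lia.
- by rewrite pmin // (psize HB).
Qed.

Lemma map_sub_iota t a m : map (fun x => x - t) (iota (t + a) m) = iota a m.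
Proof.
rewrite iotaDl -map_comp; rewrite -[RHS]map_id; apply: eq_map => x /=; lia.
Qed.

Lemma Lprime_cat p q : ret_at_end 0 p ->
  Lprime (p ++ q) = Lprime q ++ Lprime_irr p.
Proof.
move=> H; rewrite /Lprime /components comps_ret //=.
by rewrite rev_cons flatten_rcons.
Qed.

Lemma main_gen m s : size s = m -> perm_eq s (iota 1 m) -> avoids123 s ->
  mu s = Lprime (lambda s).
Proof.
elim/ltn_ind: m s => n IH s Hs Hp Hav.
case: (posnP n) => Hn.
  by move: Hs; rewrite Hn; case: s {Hp Hav IH}.
have Hpv := pval Hp.
pose Q k := (0 < k) && all (fun x => n - k < x) (take k s).
have exQ : exists k, Q k.
  exists n; rewrite /Q Hn take_oversize ?Hs //= subnn.
  by apply/allP => x; rewrite (pmem Hp); lia.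
case: (ex_minnP exQ) => b /andP [Hb0 Hball] Hmin.
have Hbn : b <= n.
  apply: Hmin; rewrite /Q Hn take_oversize ?Hs //= subnn.
  by apply/allP => x; rewrite (pmem Hp); lia.
set t := n - b.
set B := take b s.
set R := drop b s.
have HsB : size B = b by rewrite size_take Hs; case: ltngtP Hbn => //; lia.
have HsR : size R = t by rewrite size_drop Hs.
have HBv : forall x, x \in B -> t < x <= n.
  move=> x Hx; move/allP: Hball => /(_ x Hx) H1.
  have : x \in s by apply: mem_take Hx.
  rewrite (pmem Hp); lia.
have HBp : perm_eq B (iota t.+1 b).
  have Hu : uniq B := take_uniq _ (puniq Hp).
  have Hsub : {subset B <= iota t.+1 b}.
    by move=> x /HBv; rewrite mem_iota; lia.
  have Hsz : size (iota t.+1 b) <= size B by rewrite size_iota HsB.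
  have [_ Heq] := uniq_min_size Hu Hsub Hsz.
  apply: uniq_perm => //; exact: iota_uniq.
set B' := map (fun x => x - t) B.
have HB'p : perm_eq B' (iota 1 b).
  by rewrite -(map_sub_iota t 1 b) addn1; apply: perm_map.
have EB : map (addn t) B' = B.
  rewrite /B' -map_comp map_id_in // => x /HBv /=; lia.
have HRp : perm_eq R (iota 1 t).
  have H1 : perm_eq (B ++ R) (iota 1 t ++ iota t.+1 b).
    by rewrite cat_take_drop -addn1 -iotaD addnC subnK.
  rewrite -(perm_cat2r B) (perm_catC R B) (permPl H1).
  by rewrite perm_cat2l perm_sym.
have HsB' : size B' = b by rewrite size_map.
have nB' : forall i, i < b -> nth 0 B' i = nth 0 s i - t /\ t < nth 0 s i.
  move=> i Hi; rewrite (nth_map 0) ?HsB //.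
  have Hm : nth 0 B i \in B by apply: mem_nth; rewrite HsB.
  have := HBv _ Hm; rewrite /B nth_take //; lia.
have avB' : avoids123 B'.
  move=> [i [j [k [Hij Hjk Hk /andP [H1 H2]]]]]; apply: Hav.
  rewrite HsB' in Hk.
  have [E1 F1] := nB' i ltac:(lia); have [E2 F2] := nB' j ltac:(lia).
  have [E3 F3] := nB' k Hk.
  exists i, j, k; split; [exact: Hij | exact: Hjk | rewrite Hs; lia | ].
  rewrite E1 E2 E3 in H1 H2; apply/andP; split; lia.
have avR : avoids123 R.
  move=> [i [j [k [Hij Hjk Hk /andP [H1 H2]]]]]; apply: Hav.
  rewrite HsR in Hk; rewrite /R !nth_drop in H1 H2.
  exists (b + i), (b + j), (b + k); split; [lia | lia | rewrite Hs; lia | ].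
  by apply/andP; split.
have irrB' : irr b B'.
  move=> k /andP [Hk0 Hkb]; apply/negP => Hall.
  have : b <= k; last lia.
  apply: Hmin; rewrite /Q Hk0 /=.
  apply/allP => x /(nthP 0) [m]; rewrite size_take Hs.
  have -> : k < n by lia.
  move=> Hm; rewrite nth_take // => <-.
  have Hx : nth 0 B' m \in take k B'.
    rewrite -(nth_take 0 Hm); apply: mem_nth; rewrite size_take HsB'.
    by have -> : k < b by [].
  have := (allP Hall) _ Hx; have [E F] := nB' m ltac:(lia); rewrite E; move: F; rewrite /t; set y := nth 0 s m; lia.
have Hmin1 : foldl minn n.+1 B = t.+1.
  apply/eqP; rewrite eqn_leq; apply/andP; split.
    by apply: fmin_mem; rewrite (perm_mem HBp) mem_iota; lia.
  apply: fmin_ge; last lia.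
  by move=> y /HBv; lia.
have Hlam : lambda s = lambda B' ++ lambda R.
  rewrite /lambda Hs HsB' HsR -{1}(cat_take_drop b s) lam_cat -/B -/R Hmin1 -EB.
  have -> : n.+1 = t + b.+1 by rewrite /t; lia.
  by rewrite lam_shift.
have Hmu : mu s = mu R ++ mu B'.
  rewrite /mu -{1}(cat_take_drop b s) -/B -/R rev_cat mu_cat.
  have HRr : perm_eq (rev R) (iota 1 t) by rewrite perm_rev.
  rewrite (pmax HRr); congr (_ ++ _).
  by rewrite -EB -map_rev -{1}(addn0 t) mu_shift.
rewrite Hmu Hlam Lprime_cat; last exact: ret_block Hb0 HB'p irrB'.
rewrite (IH t _ R HsR HRp avR); last by rewrite /t; lia.
by rewrite (core Hb0 HB'p avB' irrB').
Qed.

Theorem theorem6 (n : nat) (sigma : seq nat) :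
  1 <= n -> is_perm_of n sigma -> avoids123 sigma ->
  mu sigma = Lprime (lambda sigma).
Proof.
move=> Hn Hp Hav; apply: (main_gen (m := n)) => //.
by rewrite (perm_size Hp) size_iota.
Qed.
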